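(* Let $\mathcal G_n=\{x_{i,n}\}_{i=1,\ldots,d_n}$ be an asymptotically uniform grid in $[a,b]$ with $d_n\to\infty$, and let $\mathcal G_n'=\{x'_{i,n}\}_{i=1,\ldots,d'_n}$ be a sequence of $d_n'$ real points such that $\mathcal G_n'\subset[a-\epsilon_n,b+\epsilon_n]$ for some $\epsilon_n\to0$ and $|\mathcal G_n\triangle\mathcal G_n'|=o(d_n)$ as $n\to\infty$. Then $d_n'/d_n\to1$ as $n\to\infty$, and $\mathcal G_n'$, with its points rearranged in increasing order, is an asymptotically uniform grid in $[a,b]$.
   Context: A sequence of points $\{x_{i,n}\}_{i=1,\ldots,m_n}$ is an asymptotically uniform grid in $[a,b]$ if $\max_{i=1,\ldots,m_n}|x_{i,n}-(a+i(b-a)/m_n)|\to0$. The sequences of points $\mathcal G_n,\mathcal G_n'$ are regarded as finite multisets, and $\mathcal G_n\triangle\mathcal G_n'=(\mathcal G_n\setminus\mathcal G_n')\cup(\mathcal G_n'\setminus\mathcal G_n)$ is the multiset symmetric difference (counting multiplicities). *)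

(* Defs.v *)
From HB Require Import structures.
From mathcomp Require Import all_boot all_order all_algebra.
From mathcomp Require Import all_classical all_reals all_analysis.
Set Implicit Arguments. Unset Strict Implicit. Unset Printing Implicit Defensive.
Import Order.TTheory GRing.Theory Num.Theory.
Import numFieldNormedType.Exports.
Local Open Scope classical_set_scope.
Local Open Scope ring_scope.

(* Maximal deviation of the finite sequence s = [x_1; ...; x_m] (x_i = nth 0 s (i-1))
   from the uniform grid a + i(b-a)/m, i = 1..m.  (0 for the empty sequence.) *)
Definition grid_dev (R : realType) (a b : R) (s : seq R) : R :=
  \big[Order.max/0]_(i < size s)
     `| nth 0 s i - (a + (i.+1)%:R * (b - a) / (size s)%:R) |.

Definition asymp_uniform_grid (R : realType) (a b : R) (G : nat -> seq R) : Prop :=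
  (fun n => grid_dev a b (G n)) @ \oo --> (0 : R).

(* Cardinality of the multiset symmetric difference of s and t (with multiplicities). *)
Definition msymdiff_card (R : realType) (s t : seq R) : nat :=
  \sum_(x <- undup (s ++ t)) `| (count_mem x s)%:Z - (count_mem x t)%:Z |%N.

(* Main.v *)
Require Import Defs.
From HB Require Import structures.
From mathcomp Require Import all_boot all_order all_algebra.
From mathcomp Require Import all_classical all_reals all_analysis.
From mathcomp Require Import zify ring lra.
Import Order.TTheory GRing.Theory Num.Theory.
Import numFieldNormedType.Exports.
Local Open Scope ring_scope.

Lemma count_big (T : eqType) (P : pred T) (u s : seq T) :
  uniq u -> {subset s <= u} ->
  count P s = (\sum_(x <- u | P x) count_mem x s)%N.
Proof.
move=> Uu; elim: s => [|y s IH] sub /=.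
  by rewrite big1.
rewrite big_split /= -IH; last by move=> z zs; apply: sub; rewrite inE zs orbT.
congr (_ + _)%N.
have yu : y \in u by apply: sub; rewrite inE eqxx.
rewrite big_mkcond (bigD1_seq y) //= eqxx big1 ?addn0; first by case: (P y).
by move=> x /negbTE xy; rewrite eq_sym xy; case: (P x).
Qed.

Lemma count_msym (T : eqType) (P : pred T) (s t : seq T) (D : nat) :
  D = (\sum_(x <- undup (s ++ t)) `| (count_mem x s)%:Z - (count_mem x t)%:Z |%N)%N ->
  (count P s <= count P t + D)%N /\ (count P t <= count P s + D)%N.
Proof.
move=> ->.
have U := undup_uniq (s ++ t).
have Ss : {subset s <= undup (s ++ t)} by move=> x xs; rewrite mem_undup mem_cat xs.
have St : {subset t <= undup (s ++ t)} by move=> x xs; rewrite mem_undup mem_cat xs orbT.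
rewrite (count_big _ P _ _ U Ss) (count_big _ P _ _ U St).
have le1 : (\sum_(x <- undup (s ++ t) | P x) `| (count_mem x s)%:Z - (count_mem x t)%:Z |%N
   <= \sum_(x <- undup (s ++ t)) `| (count_mem x s)%:Z - (count_mem x t)%:Z |%N)%N.
  rewrite [X in (X <= _)%N]big_mkcond /=; apply: leq_sum => x _; by case: (P x).
split.
- apply: leq_trans _ (leq_add (leqnn _) le1); rewrite -big_split /=.
  apply: leq_sum => x _; lia.
- apply: leq_trans _ (leq_add (leqnn _) le1); rewrite -big_split /=.
  apply: leq_sum => x _; lia.
Qed.

Lemma count_iota (T : Type) (x0 : T) (P : pred T) (s : seq T) :
  count P s = count (fun k => P (nth x0 s k)) (iota 0 (size s)).
Proof. by rewrite -{1}(mkseq_nth x0 s) /mkseq count_map. Qed.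

Lemma count_lt_iota (K m : nat) : count (fun k => (k < K)%N) (iota 0 m) = minn K m.
Proof.
elim: m => [|m IH]; first by rewrite minn0.
rewrite -addn1 iotaD count_cat IH /= add0n. 
case: (ltnP m K) => h /=; lia.
Qed.

Lemma count_iota_le (P : pred nat) (K m : nat) :
  (forall k, (k < m)%N -> P k -> (k < K)%N) -> (count P (iota 0 m) <= K)%N.
Proof.
move=> h.
rewrite (@eq_in_count _ P (fun k => (k < m)%N && P k)); last first.
  by move=> k; rewrite mem_iota add0n /= => ->.
apply: (@leq_trans (count (fun k => (k < K)%N) (iota 0 m))).
  by apply: sub_count => k /andP[km Pk]; exact: h.
rewrite count_lt_iota; exact: geq_minl.
Qed.

Lemma count_iota_ge (P : pred nat) (K m : nat) : (K <= m)%N ->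
  (forall k, (k < K)%N -> P k) -> (K <= count P (iota 0 m))%N.
Proof.
move=> Km h.
apply: (@leq_trans (count (fun k => (k < K)%N) (iota 0 m))).
  by rewrite count_lt_iota; lia.
by apply: sub_count => k; exact: h.
Qed.

Lemma aux1 (i D : nat) : (i.+1 <= i.+1 - D + D)%N.
Proof. lia. Qed.

Lemma aux2 (i D c K : nat) : K = (i.+1 - D)%N -> (0 < K)%N -> (c <= K.-1)%N -> (i.+1 <= c + D)%N -> False.
Proof. lia. Qed.

Lemma grid_dev_ge0 (R : realType) (a b : R) s : 0 <= grid_dev a b s.
Proof. rewrite /grid_dev; elim/big_ind: _ => //= x y hx hy; by rewrite le_max hx. Qed.

Lemma grid_dev_nth (R : realType) (a b : R) s k : (k < size s)%N ->
  `|nth 0 s k - (a + k.+1%:R * (b - a) / (size s)%:R)| <= grid_dev a b s.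
Proof. move=> hk; rewrite /grid_dev; exact: (le_bigmax _ _ (Ordinal hk)). Qed.

Lemma pointwise (R : realType) (a b e : R) (s t : seq R) :
  a <= b -> (0 < size s)%N -> (0 < size t)%N ->
  (forall x, x \in t -> a - e <= x <= b + e) ->
  grid_dev a b (sort <=%R t) <=
   (b - a) * `|(size t)%:R / (size s)%:R - 1| +
   (b - a) * ((msymdiff_card s t)%:R / (size s)%:R) + grid_dev a b s + `|e|.
Proof.
move=> ab sp tp Ht.
have Hc P : (count P s <= count P t + msymdiff_card s t)%N /\
            (count P t <= count P s + msymdiff_card s t)%N by apply: count_msym.
set D := msymdiff_card s t in Hc *.
set m := size s in sp Hc *. set m' := size t in tp *.
set eta := grid_dev a b s.
set h := (b - a) / m%:R.
have h0 : 0 <= h by apply: divr_ge0; [lra | exact: ler0n].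
have mpos : (0:R) < m%:R by rewrite ltr0n.
have m'pos : (0:R) < m'%:R by rewrite ltr0n.
have eta0 : 0 <= eta := grid_dev_ge0 _ a b s.
have e0 : 0 <= `|e| := normr_ge0 e.
have ee : e <= `|e| := ler_norm e.
have gs k : (k < m)%N -> `|nth 0 s k - (a + k.+1%:R * h)| <= eta.
  by move=> hk; rewrite /h mulrA; exact: grid_dev_nth.
have srt : sorted <=%R (sort <=%R t) := sort_sorted le_total t.
have mh : m%:R * h = b - a by rewrite /h mulrC divfK // gt_eqF.
rewrite /grid_dev; apply: bigmax_le => [|i _].
  have : 0 <= (b - a) * `|m'%:R / m%:R - 1| by apply: mulr_ge0; [lra | exact: normr_ge0].
  have : 0 <= (b - a) * (D%:R / m%:R) by apply: mulr_ge0; [lra | apply: divr_ge0; exact: ler0n].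
  lra.
case: i => i hi0 /=.
have -> : (size (sort <=%R t))%:R = m'%:R :> R by rewrite size_sort.
set y := nth 0 (sort <=%R t) i.
have hi : (i < m')%N by move: hi0; rewrite size_sort.
have yt : y \in t by rewrite -(mem_sort <=%R) mem_nth // size_sort.
have /andP[ya yb] := Ht y yt.
have C1 : (i.+1 <= count (fun x : R => (x <= y)%R) t)%N.
  rewrite -(count_sort <=%R) (count_iota _ 0) size_sort.
  apply: count_iota_ge => // k ki /=.
  apply: (sorted_leq_nth le_trans lexx 0 srt); rewrite ?inE ?size_sort //.
  exact: leq_trans ki hi.
have C2 : (count (fun x : R => (x < y)%R) t <= i)%N.
  rewrite -(count_sort <=%R) (count_iota _ 0) size_sort.
  apply: count_iota_le => k km /= hk.
  rewrite ltnNge; apply/negP => ik.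
  have := sorted_leq_nth le_trans lexx 0 srt.
  move=> /(_ i k); rewrite !inE !size_sort => /(_ hi km ik).
  by rewrite -/y leNgt hk.
have C1' : (i.+1 <= count (fun x : R => (x <= y)%R) s + D)%N.
  exact: leq_trans C1 (Hc _).2.
have C2' : (count (fun x : R => (x < y)%R) s <= i + D)%N.
  exact: leq_trans (Hc _).1 (leq_add C2 (leqnn D)).
have Up : y <= a + (i.+1 + D)%:R * h + eta + `|e|.
  set K := (i.+1 + D)%N.
  have KE : K = (i.+1 + D)%N by [].
  case: (leqP K m) => Km.
  - have : y <= a + K%:R * h + eta; last by lra.
    rewrite leNgt; apply/negP => hy.
    have : (K <= count (fun x : R => (x < y)%R) s)%N.
      rewrite (count_iota _ 0); apply: count_iota_ge => // k kK /=.
      have km : (k < m)%N by exact: leq_trans kK Km.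
      have h1 : k.+1%:R * h <= K%:R * h by apply: ler_wpM2r => //; rewrite ler_nat.
      have := gs k km; rewrite ler_norml => /andP[h2 h3]; lra.
    by move=> /leq_trans/(_ C2'); rewrite KE addSn ltnn.
  - have : m%:R * h <= K%:R * h by apply: ler_wpM2r => //; rewrite ler_nat ltnW.
    lra.
have Lo : a + ((i.+1)%:R - D%:R) * h - eta - `|e| <= y.
  set K := (i.+1 - D)%N.
  have KE : K = (i.+1 - D)%N by [].
  have KD : (i.+1)%:R - D%:R <= K%:R :> R.
    by rewrite lerBlDr -natrD ler_nat KE; apply: aux1.
  have KDh : ((i.+1)%:R - D%:R) * h <= K%:R * h by apply: ler_wpM2r.
  suff : a + K%:R * h - eta - `|e| <= y by lra.
  case: (posnP K) => K0.
  - rewrite K0 mul0r; lra.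
  - rewrite leNgt; apply/negP => hy.
    have : (count (fun x : R => (x <= y)%R) s <= K.-1)%N.
      rewrite (count_iota _ 0); apply: count_iota_le => k km /= hk.
      have := gs k km; rewrite ler_norml => /andP[h2 h3].
      rewrite ltnNge; apply/negP => Kk.
      have h4 : K%:R * h <= k.+1%:R * h by apply: ler_wpM2r => //; rewrite ler_nat -(prednK K0) ltnS.
      lra.
    move=> c; exact: (aux2 _ _ _ _ KE K0 c C1').
set q : R := (i.+1)%:R.
set hp := (b - a) / m'%:R.
have eq1 : q * (b - a) / m'%:R = q * hp by rewrite mulrA.
have eq2 : (b - a) * (D%:R / m%:R) = D%:R * h by rewrite /h mulrCA.
have eq3 : (b - a) * `|m'%:R / m%:R - 1| = m'%:R * `|h - hp|.
  rewrite -(ger0_norm (ltW m'pos)) -normrM ger0_norm; last by lra.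
  rewrite -[X in X * `|_|](@ger0_norm _ (b - a)); last by lra.
  rewrite -normrM; congr `|_|; rewrite /h /hp; field.
  by apply/andP; split; apply: lt0r_neq0.
have hq : q <= m'%:R by rewrite /q ler_nat.
have n1 : q * `|h - hp| <= m'%:R * `|h - hp| by apply: ler_wpM2r => //; exact: normr_ge0.
have n2 : q * (h - hp) <= q * `|h - hp| by apply: ler_wpM2l; [exact: ler0n | exact: ler_norm].
have n3 : - (q * `|h - hp|) <= q * (h - hp).
  rewrite -mulrN; apply: ler_wpM2l; [exact: ler0n |].
  by rewrite lerNl -normrN opprB ler_norm.
rewrite -/q eq1 eq2 eq3 ler_norml; rewrite natrD in Up.
apply/andP; split; lra.
Qed.

Local Open Scope classical_set_scope.
Local Open Scope ring_scope.

Theorem lemma3p11 (R : realType) (a b : R) (G G' : nat -> seq R) :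
  asymp_uniform_grid a b G ->
  (fun n => ((size (G n))%:R : R)) @ \oo --> +oo ->
  (exists eps : nat -> R, eps @ \oo --> (0 : R) /\
     forall n x, x \in G' n -> a - eps n <= x <= b + eps n) ->
  (fun n => ((msymdiff_card (G n) (G' n))%:R / (size (G n))%:R : R)) @ \oo --> (0 : R) ->
  (fun n => ((size (G' n))%:R / (size (G n))%:R : R)) @ \oo --> (1 : R) /\
  asymp_uniform_grid a b (fun n => sort <=%R (G' n)).
Proof.
move=> HG Hm [e [He Hin]] HD.
have Hpos : \forall n \near \oo, (0 < size (G n))%N.
  near=> n. rewrite -(ltr0n R). near: n. exact: (cvgry_gt Hm 0).
have Hsz n : (size (G' n) <= size (G n) + msymdiff_card (G n) (G' n))%N /\
             (size (G n) <= size (G' n) + msymdiff_card (G n) (G' n))%N.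
  have := count_msym _ predT (G n) (G' n) (msymdiff_card (G n) (G' n)) erefl.
  by rewrite !count_predT => -[h1 h2]; split.
have P1 : (fun n => ((size (G' n))%:R / (size (G n))%:R : R)) @ \oo --> (1 : R).
  apply: (@squeeze_cvgr _ _ _ _
    (fun n => 1 - (msymdiff_card (G n) (G' n))%:R / (size (G n))%:R)
    (fun n => 1 + (msymdiff_card (G n) (G' n))%:R / (size (G n))%:R)).
  - near=> n.
    have hn : (0 < size (G n))%N by near: n.
    have [h1 h2] := Hsz n.
    set D := msymdiff_card (G n) (G' n) in h1 h2 *.
    set m := size (G n) in hn h1 h2 *.
    set m' := size (G' n) in h1 h2 *.
    have mpos : (0:R) < m%:R by rewrite ltr0n.
    have r1 : (m'%:R : R) <= m%:R + D%:R by rewrite -natrD ler_nat.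
    have r2 : (m%:R : R) <= m'%:R + D%:R by rewrite -natrD ler_nat.
    have E1 : 1 - D%:R / m%:R = (m%:R - D%:R) / m%:R :> R.
      by field; apply: lt0r_neq0.
    have E2 : 1 + D%:R / m%:R = (m%:R + D%:R) / m%:R :> R.
      by field; apply: lt0r_neq0.
    rewrite E1 E2 !ler_pM2r ?invr_gt0 //; apply/andP; split; lra.
  - rewrite -[X in _ --> X]subr0; apply: cvgB => //; exact: cvg_cst.
  - rewrite -[X in _ --> X]addr0; apply: cvgD => //; exact: cvg_cst.
have Ne : (fun n => `|e n|) @ \oo --> (0 : R).
  rewrite -(@normr0 _ R). exact: cvg_norm.
have H1 : \forall n \near \oo, (1/2 : R) < (size (G' n))%:R / (size (G n))%:R.
  by apply: (cvgr_gt 1 P1); lra.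
have Hpos' : \forall n \near \oo, (0 < size (G' n))%N.
  near=> n. have h1 : (1/2 : R) < (size (G' n))%:R / (size (G n))%:R by near: n.
  rewrite lt0n; apply/negP => /eqP z.
  by move: h1; rewrite z mul0r; lra.
have ab : a <= b.
  rewrite leNgt; apply/negP => ba.
  have H2 : \forall n \near \oo, `|e n| < (a - b) / 2.
    by apply: (cvgr_lt 0 Ne); lra.
  near \oo => n.
  have h1 : (0 < size (G' n))%N by near: n.
  have h2 : `|e n| < (a - b) / 2 by near: n.
  have /andP[x1 x2] := Hin n _ (mem_nth 0 h1).
  have := ler_norm (e n); have := ler_norm (- e n); rewrite normrN.
  lra.
split => //.
rewrite /asymp_uniform_grid.
apply: (@squeeze_cvgr _ _ _ _ (fun=> 0)
   (fun n => (b - a) * `|(size (G' n))%:R / (size (G n))%:R - 1| +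
   (b - a) * ((msymdiff_card (G n) (G' n))%:R / (size (G n))%:R) + grid_dev a b (G n) + `|e n|)).
- near=> n.
  have hn : (0 < size (G n))%N by near: n.
  have hn' : (0 < size (G' n))%N by near: n.
  rewrite grid_dev_ge0 /=; apply: pointwise => //; exact: Hin.
- exact: cvg_cst.
- have L1 : (fun n => `|(size (G' n))%:R / (size (G n))%:R - 1|) @ \oo --> (0 : R).
    have -> : (0:R) = `|1 - 1| by rewrite subrr normr0.
    apply: cvg_norm; apply: cvgB => //; exact: cvg_cst.
  have -> : (0:R) = (b - a) * 0 + (b - a) * 0 + 0 + 0 by rewrite !mulr0 !addr0.
  apply: cvgD => //; apply: cvgD => //; apply: cvgD => //; apply: cvgM => //; exact: cvg_cst.
Unshelve. all: by end_near.
Qed.
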